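(* Let $P,T:\mathbb{Z}\to\mathrm{GL}(2,\mathbb{R})$ be cohomologous via a conjugacy sequence $Q:\mathbb{Z}\to\mathrm{GL}(2,\mathbb{R})$, i.e. $P(i)=Q(i+1)T(i)Q(i)^{-1}$ for all $i\in\mathbb{Z}$. Assume there exist constants $C_1,C_2$ with $C_1>\sigma_1(Q(i))\ge\sigma_2(Q(i))>C_2>0$ for all $i\in\mathbb{Z}$, where $\sigma_1(Q(i))\ge\sigma_2(Q(i))$ are the singular values of $Q(i)$. Then $P$ admits a dominated splitting if and only if $T$ admits a dominated splitting.
   Context: For a cocycle $A:\mathbb{Z}\to\mathrm{GL}(2,\mathbb{R})$ define $A_n(i)=A(i+n-1)\cdots A(i)$ for $n\ge1$. $\mathbb{RP}^1$ is the space of one-dimensional subspaces of $\mathbb{R}^2$ with the natural $\mathrm{GL}(2,\mathbb{R})$-action and metric $d(\bar u,\bar v)=\sqrt{1-(\langle u,v\rangle/(\|u\|\|v\|))^2}$; norms are Euclidean / operator norms. A cocycle $A:\mathbb{Z}\to\mathrm{GL}(2,\mathbb{R})$ admits a dominated splitting if $\sup_i\|A(i)\|<\infty$ and there exist maps $s,u:\mathbb{Z}\to\mathbb{RP}^1$ with: (DS1) $A(i)u(i)=u(i+1)$, $A(i)s(i)=s(i+1)$ for all $i$; (DS2) there exist $N\in\mathbb{N}$, $\eta>1$ with $\|A_N(i)\vec u\|>\eta\|A_N(i)\vec s\|$ for all $i$ and all unit vectors $\vec u\in u(i)$, $\vec s\in s(i)$; (DS3) there is $\delta>0$ with $d(u(i),s(i))>\delta$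 for all $i$; (DS4) for that $N$, $\inf_{i\in\mathbb{Z}}\|A_N(i)\|>0$. *)

(* Defs.v *)
From Stdlib Require Import Reals Lra ZArith.
From Coquelicot Require Import Coquelicot.
Open Scope R_scope.

Definition vec := (R * R)%type.
Record mat := Mat { m11 : R; m12 : R; m21 : R; m22 : R }.

Definition vzero : vec := (0, 0).
Definition vscal (t : R) (v : vec) : vec := (t * fst v, t * snd v).
Definition vdot (v w : vec) : R := fst v * fst w + snd v * snd w.
Definition vnorm (v : vec) : R := sqrt (vdot v v).

Definition mapply (A : mat) (v : vec) : vec :=
  (m11 A * fst v + m12 A * snd v, m21 A * fst v + m22 A * snd v).
Definition mmul (A B : mat) : mat :=
  Mat (m11 A * m11 B + m12 A * m21 B) (m11 A * m12 B + m12 A * m22 B)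
      (m21 A * m11 B + m22 A * m21 B) (m21 A * m12 B + m22 A * m22 B).
Definition mid : mat := Mat 1 0 0 1.
Definition mdet (A : mat) : R := m11 A * m22 A - m12 A * m21 A.
Definition mtr (A : mat) : R := m11 A + m22 A.
Definition mtrans (A : mat) : mat := Mat (m11 A) (m21 A) (m12 A) (m22 A).
(* inverse (meaningful when det <> 0) *)
Definition minv (A : mat) : mat :=
  let d := mdet A in Mat (m22 A / d) (- m12 A / d) (- m21 A / d) (m11 A / d).
Definition inGL2 (A : mat) : Prop := mdet A <> 0.

Definition opnorm (A : mat) : R :=
  real (Lub_Rbar (fun r => exists v, vnorm v = 1 /\ r = vnorm (mapply A v))).

(* Singular values: square roots of the eigenvalues of A^T A, sigma1 >= sigma2.
   For the symmetric 2x2 matrix S = A^T A the eigenvalues are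
   (tr S +- sqrt (tr S^2 - 4 det S)) / 2. *)
Definition sing1 (A : mat) : R :=
  let S := mmul (mtrans A) A in
  sqrt ((mtr S + sqrt (mtr S ^ 2 - 4 * mdet S)) / 2).
Definition sing2 (A : mat) : R :=
  let S := mmul (mtrans A) A in
  sqrt ((mtr S - sqrt (mtr S ^ 2 - 4 * mdet S)) / 2).

Fixpoint cprod (A : Z -> mat) (n : nat) (i : Z) : mat :=
  match n with
  | O => mid
  | S k => mmul (A (i + Z.of_nat k)%Z) (cprod A k i)
  end.

(* RP^1: one-dimensional subspaces, represented by a nonzero spanning vector *)
Definition RP1 := { v : vec | v <> vzero }.
Definition in_line (L : RP1) (w : vec) : Prop := exists t, w = vscal t (proj1_sig L).
Definition act_eq (A : mat) (L L' : RP1) : Prop :=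
  forall w, in_line L' w <-> exists v, in_line L v /\ w = mapply A v.
(* the metric d on RP^1 (independent of the representatives) *)
Definition dRP1 (L L' : RP1) : R :=
  let u := proj1_sig L in let v := proj1_sig L' in
  sqrt (1 - (vdot u v / (vnorm u * vnorm v)) ^ 2).

Definition dominated_splitting (A : Z -> mat) : Prop :=
  (exists M, forall i, opnorm (A i) <= M) /\
  exists (s u : Z -> RP1) (N : nat) (eta : R),
    (forall i, act_eq (A i) (u i) (u (i + 1)%Z) /\ act_eq (A i) (s i) (s (i + 1)%Z)) /\
    (1 <= N)%nat /\ 1 < eta /\
    (forall i uv sv, in_line (u i) uv -> vnorm uv = 1 ->
        in_line (s i) sv -> vnorm sv = 1 ->
        vnorm (mapply (cprod A N i) uv) > eta * vnorm (mapply (cprod A N i) sv)) /\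
    (exists delta, 0 < delta /\ forall i, dRP1 (u i) (s i) > delta) /\
    (exists c, 0 < c /\ forall i, c <= opnorm (cprod A N i)).

(* Main.v *)
Require Import Defs.
From Stdlib Require Import Reals ZArith Lia Psatz Lra.
From Coquelicot Require Import Coquelicot.
Open Scope R_scope.

Definition vadd (v w : vec) : vec := (fst v + fst w, snd v + snd w).
Definition vdet (v w : vec) : R := fst v * snd w - snd v * fst w.

Lemma vdot_ge0 v : 0 <= vdot v v.
Proof. unfold vdot; nra. Qed.

Lemma vnorm_ge0 v : 0 <= vnorm v.
Proof. apply sqrt_pos. Qed.

Lemma vnorm_sq v : vnorm v * vnorm v = vdot v v.
Proof. apply sqrt_sqrt, vdot_ge0. Qed.

Lemma vnorm_eq0 v : vnorm v = 0 -> v = vzero.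
Proof.
  intro H. assert (H1 := vnorm_sq v). rewrite H in H1.
  destruct v as [x y]; unfold vdot in H1; simpl in H1.
  unfold vzero; f_equal; nra.
Qed.

Lemma vnorm_pos v : v <> vzero -> 0 < vnorm v.
Proof.
  intro H. destruct (vnorm_ge0 v) as [H1|H1]; auto.
  exfalso; apply H, vnorm_eq0; auto.
Qed.

Lemma sq_le_le a b : 0 <= b -> a * a <= b * b -> a <= b.
Proof. intros; nra. Qed.

Lemma vnorm_scal t v : vnorm (vscal t v) = Rabs t * vnorm v.
Proof.
  apply Rle_antisym; apply sq_le_le;
   try (apply Rmult_le_pos; [apply Rabs_pos|apply vnorm_ge0]); try apply vnorm_ge0;
  rewrite ?vnorm_sq;
  replace (Rabs t * vnorm v * (Rabs t * vnorm v)) with ((Rabs t * Rabs t) * (vnorm v * vnorm v)) by ring;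
  rewrite vnorm_sq, <- Rabs_mult, Rabs_pos_eq by nra;
  destruct v; unfold vdot, vscal; simpl; nra.
Qed.

Lemma vdot_cs v w : vdot v w <= vnorm v * vnorm w.
Proof.
  assert (H1 := vnorm_sq v). assert (H2 := vnorm_sq w).
  assert (H3 := vnorm_ge0 v). assert (H4 := vnorm_ge0 w).
  destruct v as [a b]; destruct w as [c d]; unfold vdot in *; simpl in *.
  assert ((a*c+b*d)*(a*c+b*d) <= (vnorm (a,b) * vnorm (c,d)) * (vnorm (a,b) * vnorm (c,d))).
  { replace (vnorm (a, b) * vnorm (c, d) * (vnorm (a, b) * vnorm (c, d))) with
      ((vnorm (a, b) * vnorm (a, b)) * (vnorm (c, d) * vnorm (c, d))) by ring.
    rewrite H1, H2. pose proof (Rle_0_sqr (a*d-b*c)). unfold Rsqr in *. nra. }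
  apply sq_le_le in H; nra.
Qed.

Lemma vdet_bound v w : Rabs (vdet v w) <= vnorm v * vnorm w.
Proof.
  assert (H1 := vnorm_sq v). assert (H2 := vnorm_sq w).
  assert (H3 := vnorm_ge0 v). assert (H4 := vnorm_ge0 w).
  apply sq_le_le; [nra|].
  rewrite <- Rabs_mult, Rabs_pos_eq by nra.
  replace (vnorm v * vnorm w * (vnorm v * vnorm w)) with
      ((vnorm v * vnorm v) * (vnorm w * vnorm w)) by ring.
  rewrite H1, H2. destruct v as [a b]; destruct w as [c d]; unfold vdot, vdet; simpl. pose proof (Rle_0_sqr (a*c+b*d)). unfold Rsqr in *. nra.
Qed.

Lemma vnorm_add v w : vnorm (vadd v w) <= vnorm v + vnorm w.
Proof.
  assert (H := vdot_cs v w).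
  assert (H3 := vnorm_ge0 v). assert (H4 := vnorm_ge0 w).
  apply sq_le_le; [lra|]. rewrite vnorm_sq.
  replace ((vnorm v + vnorm w) * (vnorm v + vnorm w)) with
    (vnorm v * vnorm v + vnorm w * vnorm w + 2 * (vnorm v * vnorm w)) by ring.
  rewrite !vnorm_sq. destruct v; destruct w; unfold vdot, vadd in *; simpl in *. nra.
Qed.

Lemma mapply_scal A t v : mapply A (vscal t v) = vscal t (mapply A v).
Proof. destruct v; unfold mapply, vscal; simpl; f_equal; ring. Qed.

Lemma mapply_add A v w : mapply A (vadd v w) = vadd (mapply A v) (mapply A w).
Proof. destruct v; destruct w; unfold mapply, vadd; simpl; f_equal; ring. Qed.

Lemma mapply_zero A : mapply A vzero = vzero.
Proof. unfold mapply, vzero; simpl; f_equal; ring. Qed.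

Lemma mapply_mmul A B v : mapply (mmul A B) v = mapply A (mapply B v).
Proof. destruct v; destruct A; destruct B; unfold mapply, mmul; simpl; f_equal; ring. Qed.

Lemma decomp u s w :
  vscal (vdet u s) w = vadd (vscal (vdet w s) u) (vscal (vdet u w) s).
Proof. destruct u, s, w; unfold vscal, vadd, vdet; simpl; f_equal; ring. Qed.

Lemma vdet_map A x y : vdet (mapply A x) (mapply A y) = mdet A * vdet x y.
Proof. destruct x, y, A; unfold vdet, mapply, mdet; simpl; ring. Qed.

Lemma vdet_scal s t x y : vdet (vscal s x) (vscal t y) = s * t * vdet x y.
Proof. destruct x, y; unfold vdet, vscal; simpl; ring. Qed.

Lemma exists_nat x : exists n : nat, x < INR n.
Proof.
  destruct (archimed (Rabs x)) as [H1 _].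
  exists (Z.to_nat (up (Rabs x))).
  rewrite INR_IZR_INZ, Z2Nat.id.
  - pose proof (Rle_abs x); lra.
  - apply le_IZR. pose proof (Rabs_pos x); lra.
Qed.
Lemma sqr_ge0 x : 0 <= x * x.
Proof. pose proof (Rle_0_sqr x); unfold Rsqr in *; lra. Qed.
Lemma psd_form a b r x y : 0 <= a -> 0 <= b -> a * b = r * r -> 0 <= a*x*x - 2*r*x*y + b*y*y.
Proof.
  intros Ha Hb H.
  destruct Ha as [Ha|Ha].
  - pose proof (sqr_ge0 (a*x - r*y)).
    assert (a * (a*x*x - 2*r*x*y + b*y*y) = (a*x - r*y)*(a*x-r*y)) by nra.
    nra.
  - subst a. assert (r * r = 0) by lra. assert (r = 0) by nra. subst r.
    pose proof (sqr_ge0 y). nra.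
Qed.
Lemma form_bounds (p q r s x y : R) : s*s = (p-q)^2+4*r^2 -> 0 <= s ->
  (p+q-s)/2*(x*x+y*y) <= p*x*x+2*r*x*y+q*y*y <= (p+q+s)/2*(x*x+y*y).
Proof.
  intros Hs Hs0.
  pose proof (sqr_ge0 (p-q)). pose proof (sqr_ge0 r).
  assert (s*s >= (p-q)*(p-q)) by nra.
  assert (Ha : 0 <= (s - (p-q))/2) by nra.
  assert (Hb : 0 <= (s + (p-q))/2) by nra.
  assert (Hab : (s - (p-q))/2 * ((s + (p-q))/2) = r*r) by nra.
  split.
  - pose proof (psd_form _ _ (-r) x y Hb Ha ltac:(nra)). nra.
  - pose proof (psd_form _ _ r x y Ha Hb Hab). nra.
Qed.

Lemma opnorm_bounded A : exists B, forall v, vnorm v = 1 -> vnorm (mapply A v) <= B.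
Proof.
  destruct A as [a b c d].
  exists (1 + (a*a+b*b+c*c+d*d)). intros [x y] Hv.
  assert (Hd : vdot (x,y) (x,y) = 1) by (rewrite <- vnorm_sq, Hv; ring).
  unfold vdot in Hd; simpl in Hd.
  pose proof (sqr_ge0 a); pose proof (sqr_ge0 b); pose proof (sqr_ge0 c); pose proof (sqr_ge0 d).
  apply sq_le_le; [lra|]. rewrite vnorm_sq. unfold mapply, vdot; simpl.
  pose proof (sqr_ge0 (a*y-b*x)). pose proof (sqr_ge0 (c*y-d*x)).
  assert ((a*x+b*y)*(a*x+b*y) + (c*x+d*y)*(c*x+d*y) <= (a*a+b*b+c*c+d*d)*(x*x+y*y)) by nra.
  nra.
Qed.

Lemma opnorm_spec A :
  (forall v, vnorm v = 1 -> vnorm (mapply A v) <= opnorm A) /\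
  (forall K, (forall v, vnorm v = 1 -> vnorm (mapply A v) <= K) -> opnorm A <= K).
Proof.
  unfold opnorm.
  set (E := fun r => exists v, vnorm v = 1 /\ r = vnorm (mapply A v)).
  destruct (Lub_Rbar_correct E) as [Hub Hlub].
  destruct (opnorm_bounded A) as [B HB].
  assert (HE : E (vnorm (mapply A (1,0)))).
  { exists (1,0). split; auto. unfold vnorm, vdot; simpl.
    replace (1*1+0*0) with 1 by ring. apply sqrt_1. }
  assert (HBub : is_ub_Rbar E B).
  { intros r [v [Hv ->]]. simpl. apply HB; auto. }
  pose proof (Hlub _ HBub) as H1. pose proof (Hub _ HE) as H2.
  destruct (Lub_Rbar E) as [l| |]; simpl in *; try contradiction.
  split.
  - intros v Hv. apply (Hub (vnorm (mapply A v))). exists v; auto.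
  - intros K HK. apply (Hlub (Finite K)). intros r [v [Hv ->]]. simpl. apply HK; auto.
Qed.

Lemma opnorm_ge A v : vnorm v = 1 -> vnorm (mapply A v) <= opnorm A.
Proof. apply opnorm_spec. Qed.

Lemma opnorm_le A K : (forall v, vnorm v = 1 -> vnorm (mapply A v) <= K) -> opnorm A <= K.
Proof. apply opnorm_spec. Qed.

Lemma opnorm_ge0 A : 0 <= opnorm A.
Proof.
  eapply Rle_trans; [apply (vnorm_ge0 (mapply A (1,0)))|]. apply opnorm_ge.
  unfold vnorm, vdot; simpl. replace (1*1+0*0) with 1 by ring. apply sqrt_1.
Qed.

Lemma unitize v : v <> vzero -> vnorm (vscal (/ vnorm v) v) = 1.
Proof.
  intro H. pose proof (vnorm_pos v H).
  rewrite vnorm_scal, Rabs_pos_eq by (left; apply Rinv_0_lt_compat; auto).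
  field; lra.
Qed.

Lemma vscal_unitize v : v <> vzero -> v = vscal (vnorm v) (vscal (/ vnorm v) v).
Proof.
  intro H. pose proof (vnorm_pos v H). destruct v; unfold vscal; simpl; f_equal; field; lra.
Qed.

Lemma opnorm_mul A v : vnorm (mapply A v) <= opnorm A * vnorm v.
Proof.
  destruct (Req_dec (vnorm v) 0) as [H|H].
  - apply vnorm_eq0 in H. subst v. rewrite mapply_zero.
    unfold vnorm, vdot, vzero; simpl. replace (0*0+0*0) with 0 by ring. rewrite sqrt_0.
    pose proof (opnorm_ge0 A). nra.
  - assert (Hv : v <> vzero) by (intro; subst; apply H; unfold vnorm, vdot, vzero; simpl;
        replace (0*0+0*0) with 0 by ring; apply sqrt_0).
    rewrite (vscal_unitize v Hv) at 1. rewrite mapply_scal, vnorm_scal.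
    rewrite Rabs_pos_eq by apply vnorm_ge0.
    pose proof (opnorm_ge A _ (unitize v Hv)). pose proof (vnorm_ge0 v). nra.
Qed.

Lemma sqrt_gt_sq x c : 0 < c -> c < sqrt x -> c * c < x.
Proof.
  intros Hc H. destruct (Rle_lt_dec x 0) as [Hx|Hx].
  - rewrite sqrt_neg_0 in H; lra.
  - pose proof (sqrt_sqrt x ltac:(lra)). nra.
Qed.

Lemma sing_bounds A C1 C2 : 0 < C2 -> C1 > sing1 A -> sing2 A > C2 ->
  forall v, C2 * vnorm v <= vnorm (mapply A v) /\ vnorm (mapply A v) <= C1 * vnorm v.
Proof.
  intros HC2 H1 H2 [x y].
  destruct A as [a b c d]. unfold sing1, sing2 in *.
  set (p := a*a+c*c). set (q := b*b+d*d). set (r := a*b+c*d).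
  assert (HD : mtr (mmul (mtrans (Mat a b c d)) (Mat a b c d)) ^ 2 - 4 * mdet (mmul (mtrans (Mat a b c d)) (Mat a b c d)) = (p-q)^2 + 4*r^2) by (unfold p, q, r, mtr, mdet, mmul, mtrans; simpl; ring).
  assert (Htr : mtr (mmul (mtrans (Mat a b c d)) (Mat a b c d)) = p + q) by (unfold p, q, mtr, mmul, mtrans; simpl; ring).
  cbv zeta in H1, H2. rewrite HD, Htr in H1, H2.
  set (D := (p-q)^2 + 4*r^2) in *.
  set (s := sqrt D) in *.
  assert (Hs0 : 0 <= s) by apply sqrt_pos.
  assert (Hss : s * s = (p-q)^2+4*r^2) by (unfold s; rewrite sqrt_sqrt; [auto| unfold D; pose proof (sqr_ge0 (p-q)); pose proof (sqr_ge0 r); nra]).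
  pose proof (form_bounds p q r s x y Hss Hs0) as [Fl Fu].
  assert (Hform : vdot (mapply (Mat a b c d) (x,y)) (mapply (Mat a b c d) (x,y)) = p*x*x+2*r*x*y+q*y*y)
    by (unfold vdot, mapply, p, q, r; simpl; ring).
  assert (Hv : vdot (x,y) (x,y) = x*x+y*y) by (unfold vdot; simpl; ring).
  pose proof (sqrt_gt_sq _ _ HC2 H2) as H2'.
  pose proof (sqr_ge0 x); pose proof (sqr_ge0 y).
  pose proof (vnorm_ge0 (x,y)). pose proof (vnorm_ge0 (mapply (Mat a b c d) (x,y))).
  pose proof (vnorm_sq (x,y)). pose proof (vnorm_sq (mapply (Mat a b c d) (x,y))).
  rewrite Hv in *. rewrite Hform in *.
  split.
  - apply sq_le_le; auto.
    assert (C2*C2*(x*x+y*y) <= (p+q-s)/2*(x*x+y*y)) by (apply Rmult_le_compat_r; lra).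
    nra.
  - assert (Hp : 0 <= p) by (unfold p; pose proof (sqr_ge0 a); pose proof (sqr_ge0 c); lra).
    assert (Hq : 0 <= q) by (unfold q; pose proof (sqr_ge0 b); pose proof (sqr_ge0 d); lra).
    assert (Hl1 : 0 <= (p+q+s)/2) by lra.
    pose proof (sqrt_sqrt _ Hl1). pose proof (sqrt_pos ((p+q+s)/2)).
    assert (HC1 : 0 <= C1) by lra.
    assert (sqrt ((p+q+s)/2) * sqrt ((p+q+s)/2) <= C1 * C1) by nra.
    apply sq_le_le; [nra|]. nra.
Qed.

Definition urep (L : RP1) : vec := vscal (/ vnorm (proj1_sig L)) (proj1_sig L).

Lemma vscal_vscal a b v : vscal a (vscal b v) = vscal (a*b) v.
Proof. destruct v; unfold vscal; simpl; f_equal; ring. Qed.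

Lemma urep_unit L : vnorm (urep L) = 1.
Proof. apply unitize, (proj2_sig L). Qed.

Lemma urep_line L : in_line L (urep L).
Proof. exists (/ vnorm (proj1_sig L)). reflexivity. Qed.

Lemma line_urep L x : in_line L x -> exists t, x = vscal t (urep L) /\ vnorm x = Rabs t.
Proof.
  intros [t ->]. exists (t * vnorm (proj1_sig L)).
  pose proof (vnorm_pos _ (proj2_sig L)).
  split.
  - unfold urep. rewrite vscal_vscal. f_equal. field. lra.
  - rewrite vnorm_scal, Rabs_mult, (Rabs_pos_eq (vnorm _)); lra.
Qed.

Lemma dRP1_eq L L' : dRP1 L L' = Rabs (vdet (urep L) (urep L')).
Proof.
  unfold dRP1, urep. destruct L as [u Hu]; destruct L' as [v Hv]; cbn [proj1_sig].
  pose proof (vnorm_pos _ Hu). pose proof (vnorm_pos _ Hv).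
  pose proof (vnorm_sq u). pose proof (vnorm_sq v).
  rewrite vdet_scal, <- sqrt_Rsqr_abs. f_equal. unfold Rsqr.
  assert (Hl : vdot u v * vdot u v + vdet u v * vdet u v = vdot u u * vdot v v)
    by (destruct u, v; unfold vdot, vdet; simpl; ring).
  rewrite <- H1, <- H2 in Hl.
  field_simplify; [|lra|lra]. f_equal. nra.
Qed.

Lemma line_iter A L : (forall i, act_eq (A i) (L i) (L (i+1)%Z)) ->
  forall n i x, in_line (L i) x -> in_line (L (i + Z.of_nat n)%Z) (mapply (cprod A n i) x).
Proof.
  intros HA n. induction n as [|n IH]; intros i x Hx.
  - simpl. replace (i + 0)%Z with i by lia. destruct x; unfold mapply, mid; simpl.
    replace (1 * r + 0 * r0) with r by ring. replace (0 * r + 1 * r0) with r0 by ring. auto.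
  - simpl cprod. rewrite mapply_mmul.
    replace (i + Z.of_nat (S n))%Z with ((i + Z.of_nat n) + 1)%Z by lia.
    apply (HA (i + Z.of_nat n)%Z). exists (mapply (cprod A n i) x). split; auto.
Qed.

Lemma cprod_add A m n i v :
  mapply (cprod A (m + n) i) v = mapply (cprod A n (i + Z.of_nat m)) (mapply (cprod A m i) v).
Proof.
  induction n as [|n IH].
  - rewrite Nat.add_0_r. simpl. destruct (mapply (cprod A m i) v); unfold mapply, mid; simpl; f_equal; ring.
  - rewrite Nat.add_succ_r. simpl cprod. rewrite !mapply_mmul, IH.
    do 2 f_equal. lia.
Qed.

Lemma mapply_mid w : mapply mid w = w.
Proof. destruct w as [x y]; unfold mapply, mid; simpl; f_equal; ring. Qed.

Lemma cprod_conj (P T Q Qi : Z -> mat) :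
  (forall i v, mapply (Q i) (mapply (Qi i) v) = v) ->
  (forall i v, mapply (Qi i) (mapply (Q i) v) = v) ->
  (forall i v, mapply (P i) v = mapply (Q (i+1)%Z) (mapply (T i) (mapply (Qi i) v))) ->
  forall n i v, mapply (cprod P n i) v = mapply (Q (i + Z.of_nat n)%Z) (mapply (cprod T n i) (mapply (Qi i) v)).
Proof.
  intros HQQi HQiQ HP n. induction n as [|n IH]; intros i v.
  - simpl. replace (i + 0)%Z with i by lia. rewrite !mapply_mid. auto.
  - simpl cprod. rewrite !mapply_mmul, IH, HP, HQiQ.
    do 2 f_equal. lia.
Qed.

Lemma ratio_base (A : Z -> mat) (u s : Z -> RP1) N eta :
  (forall i uv sv, in_line (u i) uv -> vnorm uv = 1 -> in_line (s i) sv -> vnorm sv = 1 ->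
     vnorm (mapply (cprod A N i) uv) > eta * vnorm (mapply (cprod A N i) sv)) -> 0 <= eta ->
  forall i x y, in_line (u i) x -> in_line (s i) y ->
    eta * vnorm (mapply (cprod A N i) y) * vnorm x <= vnorm (mapply (cprod A N i) x) * vnorm y.
Proof.
  intros H2 He i x y Hx Hy.
  destruct (line_urep _ _ Hx) as [tx [-> Hnx]]. destruct (line_urep _ _ Hy) as [ty [-> Hny]].
  rewrite Hnx, Hny, !mapply_scal, !vnorm_scal.
  pose proof (H2 i _ _ (urep_line (u i)) (urep_unit _) (urep_line (s i)) (urep_unit _)).
  pose proof (Rabs_pos tx). pose proof (Rabs_pos ty).
  pose proof (vnorm_ge0 (mapply (cprod A N i) (urep (s i)))).
  assert (0 <= Rabs tx * Rabs ty) by nra.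
  nra.
Qed.

Lemma ratio_iter (A : Z -> mat) (u s : Z -> RP1) N eta :
  (forall i, act_eq (A i) (u i) (u (i+1)%Z) /\ act_eq (A i) (s i) (s (i+1)%Z)) ->
  (forall i uv sv, in_line (u i) uv -> vnorm uv = 1 -> in_line (s i) sv -> vnorm sv = 1 ->
     vnorm (mapply (cprod A N i) uv) > eta * vnorm (mapply (cprod A N i) sv)) -> 0 <= eta ->
  forall K i x y, in_line (u i) x -> in_line (s i) y ->
    eta ^ K * vnorm (mapply (cprod A (K * N) i) y) * vnorm x <=
      vnorm (mapply (cprod A (K * N) i) x) * vnorm y.
Proof.
  intros H1 H2 He K. induction K as [|K IH]; intros i x y Hx Hy.
  - simpl. rewrite !mapply_mid. lra.
  - rewrite Nat.mul_succ_l, !cprod_add.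
    set (x' := mapply (cprod A (K * N) i) x). set (y' := mapply (cprod A (K * N) i) y).
    assert (Hx' : in_line (u (i + Z.of_nat (K*N))%Z) x')
      by (apply line_iter; auto; intro j; apply H1).
    assert (Hy' : in_line (s (i + Z.of_nat (K*N))%Z) y')
      by (apply line_iter; auto; intro j; apply H1).
    pose proof (ratio_base A u s N eta H2 He _ _ _ Hx' Hy') as Hb.
    pose proof (IH i x y Hx Hy) as Hi. fold x' y' in Hi.
    set (j := (i + Z.of_nat (K * N))%Z) in *.
    pose proof (vnorm_ge0 x). pose proof (vnorm_ge0 y). pose proof (vnorm_ge0 x').
    pose proof (vnorm_ge0 (mapply (cprod A N j) x')).
    pose proof (vnorm_ge0 (mapply (cprod A N j) y')).
    pose proof (pow_le _ K He).
    destruct (vnorm_ge0 y') as [Hy0|Hy0].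
    + apply Rmult_le_reg_r with (vnorm y'); auto.
      simpl pow.
      apply Rle_trans with (eta * vnorm (mapply (cprod A N j) y') * (eta ^ K * vnorm y' * vnorm x)); [nra|].
      apply Rle_trans with (eta * vnorm (mapply (cprod A N j) y') * (vnorm x' * vnorm y)).
      { apply Rmult_le_compat_l; [nra|auto]. }
      nra.
    + symmetry in Hy0. apply vnorm_eq0 in Hy0. rewrite Hy0, mapply_zero.
      unfold vnorm at 1, vdot, vzero; simpl. replace (0*0+0*0) with 0 by ring.
      rewrite sqrt_0. nra.
Qed.

Lemma growth_base (A : Z -> mat) (u s : Z -> RP1) N eta delta c i :
  (forall uv sv, in_line (u i) uv -> vnorm uv = 1 -> in_line (s i) sv -> vnorm sv = 1 ->
     vnorm (mapply (cprod A N i) uv) > eta * vnorm (mapply (cprod A N i) sv)) -> 1 < eta ->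
  0 < delta -> dRP1 (u i) (s i) > delta -> c <= opnorm (cprod A N i) ->
  forall x, in_line (u i) x -> c * delta / 2 * vnorm x <= vnorm (mapply (cprod A N i) x).
Proof.
  intros H2 He Hd H3 H4 x Hx.
  set (B := cprod A N i) in *.
  set (ub := urep (u i)). set (sb := urep (s i)).
  pose proof (H2 ub sb (urep_line _) (urep_unit _) (urep_line _) (urep_unit _)) as Hus.
  fold B in Hus.
  rewrite dRP1_eq in H3. fold ub sb in H3.
  pose proof (vnorm_ge0 (mapply B sb)).
  assert (Hop : opnorm B <= 2 * vnorm (mapply B ub) / delta).
  { apply opnorm_le. intros w Hw.
    pose proof (f_equal (mapply B) (decomp ub sb w)) as E.
    rewrite mapply_add, !mapply_scal in E.
    pose proof (f_equal vnorm E) as E2. rewrite vnorm_scal in E2.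
    pose proof (vnorm_add (vscal (vdet w sb) (mapply B ub)) (vscal (vdet ub w) (mapply B sb))) as Ht.
    rewrite <- E2, !vnorm_scal in Ht.
    pose proof (vdet_bound w sb). pose proof (vdet_bound ub w).
    assert (Hu1 : vnorm ub = 1) by apply urep_unit. assert (Hs1 : vnorm sb = 1) by apply urep_unit.
    rewrite Hw, Hu1, Hs1 in *.
    pose proof (vnorm_ge0 (mapply B ub)). pose proof (vnorm_ge0 (mapply B w)).
    pose proof (Rabs_pos (vdet w sb)). pose proof (Rabs_pos (vdet ub w)).
    assert (Rabs (vdet ub sb) * vnorm (mapply B w) <= 2 * vnorm (mapply B ub)) by nra.
    apply Rmult_le_reg_r with delta; auto.
    replace (2 * vnorm (mapply B ub) / delta * delta) with (2 * vnorm (mapply B ub)) by (field; lra).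
    nra. }
  assert (Hub : c * delta / 2 <= vnorm (mapply B ub)).
  { assert (Hc : c <= 2 * vnorm (mapply B ub) / delta) by lra.
    apply Rmult_le_compat_r with (r := delta / 2) in Hc; [|lra].
    replace (2 * vnorm (mapply B ub) / delta * (delta / 2)) with (vnorm (mapply B ub)) in Hc by (field; lra).
    lra. }
  destruct (line_urep _ _ Hx) as [t [-> Hn]]. rewrite Hn, mapply_scal, vnorm_scal.
  fold ub. pose proof (Rabs_pos t). nra.
Qed.

Lemma growth_iter (A : Z -> mat) (u : Z -> RP1) N gamma :
  (forall i, act_eq (A i) (u i) (u (i+1)%Z)) -> 0 <= gamma ->
  (forall i x, in_line (u i) x -> gamma * vnorm x <= vnorm (mapply (cprod A N i) x)) ->
  forall K i x, in_line (u i) x -> gamma ^ K * vnorm x <= vnorm (mapply (cprod A (K * N) i) x).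
Proof.
  intros H1 Hg Hb K. induction K as [|K IH]; intros i x Hx.
  - simpl. rewrite mapply_mid. lra.
  - rewrite Nat.mul_succ_l, cprod_add.
    assert (Hx' : in_line (u (i + Z.of_nat (K*N))%Z) (mapply (cprod A (K * N) i) x))
      by (apply line_iter; auto).
    pose proof (Hb _ _ Hx'). pose proof (IH i x Hx).
    simpl pow. pose proof (vnorm_ge0 x). pose proof (pow_le _ K Hg).
    apply Rle_trans with (gamma * vnorm (mapply (cprod A (K * N) i) x)); auto.
    rewrite Rmult_assoc. apply Rmult_le_compat_l; auto.
Qed.

Lemma vnorm_zero : vnorm vzero = 0.
Proof. unfold vnorm, vdot, vzero; simpl. replace (0*0+0*0) with 0 by ring. apply sqrt_0. Qed.

Lemma in_line_map (Q : mat) (L : RP1) H w :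
  in_line (exist (fun v => v <> vzero) (mapply Q (proj1_sig L)) H) w <->
  exists x, in_line L x /\ w = mapply Q x.
Proof.
  unfold in_line; cbn [proj1_sig]. split.
  - intros [t ->]. exists (vscal t (proj1_sig L)). split; [exists t; auto| now rewrite mapply_scal].
  - intros [x [[t ->] ->]]. exists t. now rewrite mapply_scal.
Qed.

Lemma dRP1_raw L L' : dRP1 L L' =
  Rabs (vdet (proj1_sig L) (proj1_sig L')) / (vnorm (proj1_sig L) * vnorm (proj1_sig L')).
Proof.
  rewrite dRP1_eq. unfold urep. rewrite vdet_scal, !Rabs_mult.
  pose proof (vnorm_pos _ (proj2_sig L)). pose proof (vnorm_pos _ (proj2_sig L')).
  rewrite !Rabs_inv, !Rabs_pos_eq by lra. field. lra.
Qed.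

Lemma mdet_cols A : mdet A = vdet (mapply A (1,0)) (mapply A (0,1)).
Proof. destruct A; unfold mdet, vdet, mapply; simpl; ring. Qed.

Lemma vnorm_e1 : vnorm (1,0) = 1.
Proof. unfold vnorm, vdot; simpl. replace (1*1+0*0) with 1 by ring. apply sqrt_1. Qed.
Lemma vnorm_e2 : vnorm (0,1) = 1.
Proof. unfold vnorm, vdot; simpl. replace (0*0+1*1) with 1 by ring. apply sqrt_1. Qed.

Lemma final_ineq a b ek gk nx ny tx ty qx qy : 0<a -> 0<b -> 0 <= gk -> 0 <= ek ->
  1 <= b*nx -> a*ny <= 1 -> 0 <= nx -> 0 <= ny -> 0 <= tx -> 0 <= ty ->
  a*tx <= qx -> qy <= b*ty -> ek*ty*nx <= tx*ny -> gk*nx <= tx -> 0 <= qy ->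
  ek*(a*a/(b*b)) * qy <= qx /\ a*gk/b <= qx.
Proof.
  intros Ha Hb Hg He H1 H2 H3 H4 H5 H6 H7 H8 H9 H10 H11.
  split.
  - assert (Hty : ek * ty / b <= ek*ty*nx).
    { apply Rmult_le_reg_r with b; auto. replace (ek*ty/b*b) with (ek*ty) by (field; lra).
      assert (0 <= ek*ty) by nra. nra. }
    assert (Htx : tx * ny <= tx / a).
    { apply Rmult_le_reg_r with a; auto. replace (tx/a*a) with tx by (field; lra). nra. }
    assert (ek*ty*a/b <= tx).
    { apply Rmult_le_reg_r with (/a); [apply Rinv_0_lt_compat; auto|].
      replace (ek*ty*a/b*/a) with (ek*ty/b) by (field; lra). unfold Rdiv in Htx. lra. }
    assert (Hq : ek*(a*a/(b*b))*qy <= ek*(a*a/(b*b))*(b*ty)).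
    { apply Rmult_le_compat_l; auto. apply Rmult_le_pos; auto.
      apply Rmult_le_pos; [nra|]. left; apply Rinv_0_lt_compat; nra. }
    replace (ek*(a*a/(b*b))*(b*ty)) with (a * (ek*ty*a/b)) in Hq by (field; lra).
    nra.
  - assert (gk / b <= gk * nx).
    { apply Rmult_le_reg_r with b; auto. replace (gk/b*b) with gk by (field; lra). nra. }
    replace (a*gk/b) with (a*(gk/b)) by (field; lra). nra.
Qed.

Lemma ds_transfer (P T Q Qi : Z -> mat) (a b : R) :
  0 < a -> 0 < b ->
  (forall i v, a * vnorm v <= vnorm (mapply (Q i) v)) ->
  (forall i v, vnorm (mapply (Q i) v) <= b * vnorm v) ->
  (forall i v, mapply (Q i) (mapply (Qi i) v) = v) ->
  (forall i v, mapply (Qi i) (mapply (Q i) v) = v) ->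
  (forall i v, mapply (P i) v = mapply (Q (i+1)%Z) (mapply (T i) (mapply (Qi i) v))) ->
  dominated_splitting T -> dominated_splitting P.
Proof.
  intros Ha Hb HQa HQb HQQi HQiQ HP
    [[M HM] [s [u [N [eta [HDS1 [HN [Heta [HDS2 [[delta [Hd HDS3]] [c [Hc HDS4]]]]]]]]]]]].
  assert (HQi : forall i v, vnorm (mapply (Qi i) v) <= / a * vnorm v).
  { intros i v. pose proof (HQa i (mapply (Qi i) v)). rewrite HQQi in H.
    apply Rmult_le_reg_l with a; auto. field_simplify; lra. }
  assert (Qnz : forall i v, v <> vzero -> mapply (Q i) v <> vzero).
  { intros i v Hv E. pose proof (vnorm_pos _ Hv). pose proof (HQa i v).
    rewrite E, vnorm_zero in H0. nra. }
  set (u' := fun i => exist (fun v => v <> vzero) (mapply (Q i) (proj1_sig (u i))) (Qnz i _ (proj2_sig (u i)))).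
  set (s' := fun i => exist (fun v => v <> vzero) (mapply (Q i) (proj1_sig (s i))) (Qnz i _ (proj2_sig (s i)))).
  set (gamma := c * delta / 2).
  assert (Hgam : 0 < gamma) by (unfold gamma; nra).
  assert (Hgrowth : forall K i x, in_line (u i) x -> gamma ^ K * vnorm x <= vnorm (mapply (cprod T (K * N) i) x)).
  { apply growth_iter; [intro; apply HDS1| lra|].
    intros i x Hx. unfold gamma. eapply growth_base; eauto. }
  assert (Hratio := ratio_iter T u s N eta HDS1 HDS2 ltac:(lra)).
  destruct (exists_nat ((b*b)/(a*a)/(eta-1))) as [n Hn].
  set (K := S n).
  assert (HK : (b*b)/(a*a) < eta ^ K).
  { pose proof (Rle_pow_lin (eta - 1) K ltac:(lra)) as HB.
    replace (1 + (eta - 1)) with eta in HB by ring.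
    assert (INR n <= INR K) by (apply le_INR; unfold K; lia).
    assert ((b*b)/(a*a) < INR K * (eta - 1)).
    { apply Rmult_lt_reg_r with (/ (eta - 1)); [apply Rinv_0_lt_compat; lra|].
      replace (INR K * (eta - 1) * / (eta - 1)) with (INR K) by (field; lra). unfold Rdiv in Hn. lra. }
    lra. }
  set (E := eta ^ K * (a*a/(b*b))).
  assert (HE : 1 < E).
  { unfold E. apply Rmult_lt_reg_r with (b*b/(a*a)); [apply Rdiv_lt_0_compat; nra|].
    replace (eta ^ K * (a * a / (b * b)) * (b * b / (a * a))) with (eta ^ K) by (field; lra). lra. }
  assert (Hconj := cprod_conj P T Q Qi HQQi HQiQ HP).
  assert (HeK : 0 <= eta ^ K) by (apply pow_le; lra).
  assert (HgK : 0 <= gamma ^ K) by (apply pow_le; lra).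
  assert (Key : forall i uv sv, in_line (u' i) uv -> vnorm uv = 1 -> in_line (s' i) sv -> vnorm sv = 1 ->
     E * vnorm (mapply (cprod P (K*N) i) sv) <= vnorm (mapply (cprod P (K*N) i) uv) /\
     a * gamma ^ K / b <= vnorm (mapply (cprod P (K*N) i) uv)).
  { intros i uv sv Hu Hnu Hs Hns.
    apply in_line_map in Hu. destruct Hu as [x [Hx ->]].
    apply in_line_map in Hs. destruct Hs as [y [Hy ->]].
    rewrite !Hconj, !HQiQ.
    set (j := (i + Z.of_nat (K * N))%Z).
    pose proof (HQa i x). pose proof (HQb i x). pose proof (HQa i y). pose proof (HQb i y).
    rewrite Hnu in *. rewrite Hns in *.
    unfold E.
    apply (final_ineq a b (eta^K) (gamma^K) (vnorm x) (vnorm y)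
      (vnorm (mapply (cprod T (K * N) i) x)) (vnorm (mapply (cprod T (K * N) i) y))
      (vnorm (mapply (Q j) (mapply (cprod T (K * N) i) x)))
      (vnorm (mapply (Q j) (mapply (cprod T (K * N) i) y)))); auto; try lra; try apply vnorm_ge0.
    all: first [apply HQa | apply HQb | apply Hratio; auto]. }
  split.
  - exists (b * M / a). intro i. apply opnorm_le. intros v Hv. rewrite HP.
    eapply Rle_trans; [apply HQb|].
    pose proof (opnorm_mul (T i) (mapply (Qi i) v)).
    pose proof (HM i). pose proof (opnorm_ge0 (T i)). pose proof (HQi i v). rewrite Hv in H2.
    pose proof (vnorm_ge0 (mapply (Qi i) v)).
    assert (vnorm (mapply (T i) (mapply (Qi i) v)) <= M / a).
    { eapply Rle_trans; [apply H|]. unfold Rdiv.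
      apply Rmult_le_compat; auto. lra. }
    unfold Rdiv in *. nra.
  - exists s', u', (K * N)%nat, ((1 + E) / 2).
    split; [|split; [|split; [|split; [|split]]]].
    +
      assert (G : forall L : Z -> RP1, (forall i, act_eq (T i) (L i) (L (i+1)%Z)) ->
                forall i H1 H2, act_eq (P i) (exist (fun v => v <> vzero) (mapply (Q i) (proj1_sig (L i))) H1)
                    (exist (fun v => v <> vzero) (mapply (Q (i+1)%Z) (proj1_sig (L (i+1)%Z))) H2)).
      { intros L HL i H1 H2 w. rewrite !in_line_map. split.
        - intros [x [Hx ->]]. apply HL in Hx. destruct Hx as [y [Hy ->]].
          exists (mapply (Q i) y). split; [apply in_line_map; exists y; auto|]. rewrite HP, HQiQ. auto.
        - intros [v [Hv ->]]. apply in_line_map in Hv. destruct Hv as [y [Hy ->]].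
          rewrite HP, HQiQ. exists (mapply (T i) y). split; auto.
          apply HL. exists y; auto. }
      intro i. split; apply G; intro j; apply HDS1.
    + unfold K. simpl. lia.
    + lra.
    + intros i uv sv Hu Hnu Hs Hns. destruct (Key i uv sv Hu Hnu Hs Hns) as [K1 K2].
      pose proof (vnorm_ge0 (mapply (cprod P (K * N) i) sv)).
      assert (0 < a * gamma ^ K / b) by (apply Rdiv_lt_0_compat; [apply Rmult_lt_0_compat; [lra|apply pow_lt; lra]|lra]).
      destruct H as [H|H].
      * apply Rlt_gt. apply Rlt_le_trans with (E * vnorm (mapply (cprod P (K * N) i) sv)); auto.
        apply Rmult_lt_compat_r; lra.
      * rewrite <- H. lra.
    + exists (a*a/(b*b) * delta). split.
      { apply Rmult_lt_0_compat; auto. apply Rdiv_lt_0_compat; nra. }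
      intro i. rewrite !dRP1_raw. pose proof (HDS3 i) as H3. rewrite dRP1_raw in H3.
      unfold u', s'. cbn [proj1_sig].
      set (x := proj1_sig (u i)) in *. set (y := proj1_sig (s i)) in *.
      assert (Hx : 0 < vnorm x) by apply (vnorm_pos _ (proj2_sig (u i))).
      assert (Hy : 0 < vnorm y) by apply (vnorm_pos _ (proj2_sig (s i))).
      assert (Hqx : 0 < vnorm (mapply (Q i) x)) by (apply vnorm_pos, Qnz, (proj2_sig (u i))).
      assert (Hqy : 0 < vnorm (mapply (Q i) y)) by (apply vnorm_pos, Qnz, (proj2_sig (s i))).
      assert (Hdet : a * a * Rabs (vdet x y) <= Rabs (vdet (mapply (Q i) x) (mapply (Q i) y))).
      { rewrite <- (HQiQ i x), <- (HQiQ i y) at 1. rewrite vdet_map, Rabs_mult.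
        pose proof (vdet_bound (mapply (Qi i) (1,0)) (mapply (Qi i) (0,1))).
        rewrite <- mdet_cols in H.
        pose proof (HQi i (1,0)). pose proof (HQi i (0,1)). rewrite vnorm_e1 in H0. rewrite vnorm_e2 in H1.
        pose proof (vnorm_ge0 (mapply (Qi i) (1,0))). pose proof (vnorm_ge0 (mapply (Qi i) (0,1))).
        assert (Rabs (mdet (Qi i)) <= / a * / a).
        { eapply Rle_trans; [apply H|]. apply Rmult_le_compat; lra. }
        pose proof (Rabs_pos (vdet (mapply (Q i) x) (mapply (Q i) y))).
        assert (Rabs (mdet (Qi i)) * Rabs (vdet (mapply (Q i) x) (mapply (Q i) y)) <=
                / a * / a * Rabs (vdet (mapply (Q i) x) (mapply (Q i) y))) by (apply Rmult_le_compat_r; lra).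
        apply Rle_trans with (a * a * (/ a * / a * Rabs (vdet (mapply (Q i) x) (mapply (Q i) y)))).
        - apply Rmult_le_compat_l; [nra | exact H7].
        - right; field; lra. }
      pose proof (HQb i x). pose proof (HQb i y).
      set (dq := Rabs (vdet (mapply (Q i) x) (mapply (Q i) y))) in *.
      set (d0 := Rabs (vdet x y)) in *.
      set (nqx := vnorm (mapply (Q i) x)) in *. set (nqy := vnorm (mapply (Q i) y)) in *.
      assert (d0 / (vnorm x * vnorm y) * (a*a/(b*b)) <= dq / (nqx * nqy)).
      { apply Rmult_le_reg_r with (nqx * nqy * (b*b) * (vnorm x * vnorm y)); [repeat apply Rmult_lt_0_compat; auto|].
        replace (d0 / (vnorm x * vnorm y) * (a*a/(b*b)) * (nqx * nqy * (b*b) * (vnorm x * vnorm y)))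
          with (a * a * d0 * (nqx * nqy)) by (field; repeat split; lra).
        replace (dq / (nqx * nqy) * (nqx * nqy * (b*b) * (vnorm x * vnorm y)))
          with (dq * (b * vnorm x * (b * vnorm y))) by (field; repeat split; lra).
        assert (nqx * nqy <= b * vnorm x * (b * vnorm y)) by (apply Rmult_le_compat; lra).
        pose proof (Rabs_pos (vdet x y)) as Hd0. fold d0 in Hd0.
        apply Rle_trans with (dq * (nqx * nqy)).
        - apply Rmult_le_compat_r; [left; apply Rmult_lt_0_compat|]; lra.
        - apply Rmult_le_compat_l; [unfold dq; apply Rabs_pos|lra]. }
      assert (0 < a*a/(b*b)) by (apply Rdiv_lt_0_compat; nra).
      apply Rlt_gt. eapply Rlt_le_trans; [|apply H1].
      rewrite Rmult_comm. apply Rmult_lt_compat_r; auto.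
    + exists (a * gamma ^ K / b). split.
      { apply Rdiv_lt_0_compat; [apply Rmult_lt_0_compat; [lra|apply pow_lt; lra]|lra]. }
      intro i. eapply Rle_trans.
      * apply (Key i (urep (u' i)) (urep (s' i)) (urep_line _) (urep_unit _) (urep_line _) (urep_unit _)).
      * apply opnorm_ge, urep_unit.
Qed.

Lemma minv_l A v : mdet A <> 0 -> mapply (minv A) (mapply A v) = v.
Proof. intro H. destruct A, v; unfold minv, mapply, mdet in *; simpl in *; f_equal; field; auto. Qed.

Lemma minv_r A v : mdet A <> 0 -> mapply A (mapply (minv A) v) = v.
Proof. intro H. destruct A, v; unfold minv, mapply, mdet in *; simpl in *; f_equal; field; auto. Qed.

Theorem lemma3p13 (P T Q : Z -> mat) :
  (forall i, inGL2 (P i)) -> (forall i, inGL2 (T i)) -> (forall i, inGL2 (Q i)) ->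
  (forall i, P i = mmul (Q (i + 1)%Z) (mmul (T i) (minv (Q i)))) ->
  (exists C1 C2 : R, 0 < C2 /\
     forall i, C1 > sing1 (Q i) /\ sing1 (Q i) >= sing2 (Q i) /\ sing2 (Q i) > C2) ->
  (dominated_splitting P <-> dominated_splitting T).
Proof.
  intros HPgl HTgl HQgl Heq [C1 [C2 [HC2 Hs]]].
  assert (HB : forall i v, C2 * vnorm v <= vnorm (mapply (Q i) v) /\ vnorm (mapply (Q i) v) <= C1 * vnorm v).
  { intros i. destruct (Hs i) as [H1 [_ H3]]. apply sing_bounds; auto. }
  assert (HC1 : 0 < C1).
  { destruct (Hs 0%Z) as [H1 [H2 H3]]. unfold sing1 in H1.
    pose proof (sqrt_pos ((mtr (mmul (mtrans (Q 0%Z)) (Q 0%Z)) + sqrt (mtr (mmul (mtrans (Q 0%Z)) (Q 0%Z)) ^ 2 - 4 * mdet (mmul (mtrans (Q 0%Z)) (Q 0%Z)))) / 2)).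
    unfold sing2 in *. pose proof (sqrt_pos ((mtr (mmul (mtrans (Q 0%Z)) (Q 0%Z)) - sqrt (mtr (mmul (mtrans (Q 0%Z)) (Q 0%Z)) ^ 2 - 4 * mdet (mmul (mtrans (Q 0%Z)) (Q 0%Z)))) / 2)).
    cbv zeta in *. lra. }
  set (Qi := fun i => minv (Q i)).
  assert (H1 : forall i v, mapply (Q i) (mapply (Qi i) v) = v) by (intros; apply minv_r, HQgl).
  assert (H2 : forall i v, mapply (Qi i) (mapply (Q i) v) = v) by (intros; apply minv_l, HQgl).
  assert (HP : forall i v, mapply (P i) v = mapply (Q (i+1)%Z) (mapply (T i) (mapply (Qi i) v)))
    by (intros; rewrite Heq, !mapply_mmul; reflexivity).
  assert (HT : forall i v, mapply (T i) v = mapply (Qi (i+1)%Z) (mapply (P i) (mapply (Q i) v)))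
    by (intros; rewrite HP, H2, H2; reflexivity).
  assert (HBi1 : forall i v, / C1 * vnorm v <= vnorm (mapply (Qi i) v)).
  { intros i v. destruct (HB i (mapply (Qi i) v)) as [_ H]. rewrite H1 in H.
    apply Rmult_le_reg_l with C1; auto. field_simplify; lra. }
  assert (HBi2 : forall i v, vnorm (mapply (Qi i) v) <= / C2 * vnorm v).
  { intros i v. destruct (HB i (mapply (Qi i) v)) as [H _]. rewrite H1 in H.
    apply Rmult_le_reg_l with C2; auto. field_simplify; lra. }
  split; intro HD.
  - apply (ds_transfer T P Qi Q (/ C1) (/ C2)); auto;
      try (apply Rinv_0_lt_compat; auto).
  - apply (ds_transfer P T Q Qi C2 C1); auto; intros; apply HB.
Qed.
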